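(* For every commutative ring $k$, the Zunino category $\mathcal{Z}_k$ has equalizers and coequalizers.
   Context: Let $k$ be a commutative ring. The Zunino category $\mathcal{Z}_k$ has as objects pairs $(X,M)$ with $X$ a set and $M=(M_x)_{x\in X}$ a family of $k$-modules; a morphism $(X,M)\to(Y,N)$ is a pair $(f,\varphi)$ with $f:X\to Y$ a function and $\varphi=(\varphi_x:M_x\to N_{f(x)})_{x\in X}$ a family of $k$-linear maps; composition is $(g,\psi)\circ(f,\varphi)=(g\circ f,(\psi_{f(x)}\circ\varphi_x)_x)$. *)

(* Defs.v *)
From HB Require Import structures.
From mathcomp Require Import all_boot all_algebra.
Set Implicit Arguments. Unset Strict Implicit. Unset Printing Implicit Defensive.
Import GRing.Theory.
Local Open Scope ring_scope.

(* The Zunino category Z_k over a commutative ring k (possibly the zero ring,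
   hence comPzRingType).  An object is a pair (X, M) of a set X (a Type) and a
   family M = (M_x)_{x in X} of k-modules. *)
Record zobj (k : comPzRingType) := ZObj {
  zset : Type;
  zmod : zset -> lmodType k }.
Arguments zset {k} z.
Arguments zmod {k} z x.

Definition zhom (k : comPzRingType) (A B : zobj k) : Type :=
  {f : zset A -> zset B & forall x : zset A, {linear zmod A x -> zmod B (f x)}}.

Definition zcomp (k : comPzRingType) (A B C : zobj k)
  (g : zhom B C) (f : zhom A B) : zhom A C :=
  existT _ (fun x => projT1 g (projT1 f x))
    (fun x => (projT2 g (projT1 f x) \o projT2 f x)%FUN :
       {linear zmod A x -> zmod C (projT1 g (projT1 f x))}).

Definition is_equalizer (k : comPzRingType) (A B E : zobj k)
  (f g : zhom A B) (e : zhom E A) : Prop :=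
  zcomp f e = zcomp g e /\
  forall (Z : zobj k) (z : zhom Z A), zcomp f z = zcomp g z ->
    exists! u : zhom Z E, zcomp e u = z.

Definition is_coequalizer (k : comPzRingType) (A B Q : zobj k)
  (f g : zhom A B) (q : zhom B Q) : Prop :=
  zcomp q f = zcomp q g /\
  forall (Z : zobj k) (z : zhom B Z), zcomp z f = zcomp z g ->
    exists! u : zhom Q Z, zcomp u q = z.

Definition has_equalizers (k : comPzRingType) : Prop :=
  forall (A B : zobj k) (f g : zhom A B),
    exists (E : zobj k) (e : zhom E A), is_equalizer f g e.

Definition has_coequalizers (k : comPzRingType) : Prop :=
  forall (A B : zobj k) (f g : zhom A B),
    exists (Q : zobj k) (q : zhom B Q), is_coequalizer f g q.

(* Main.v *)
From HB Require Import structures.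
Require Import Defs.
From mathcomp Require Import all_boot all_algebra.
From mathcomp Require boolp.
From Stdlib Require Import Classical ProofIrrelevance FunctionalExtensionality ClassicalEpsilon PropExtensionality.
Set Implicit Arguments. Unset Strict Implicit. Unset Printing Implicit Defensive.
Import GRing.Theory.
Local Open Scope ring_scope.

Definition mklin (k : comPzRingType) (U V : lmodType k) (f : U -> V) (H : linear f) : {linear U -> V} :=
  HB.pack_for {linear U -> V} f (GRing.isLinear.Build k U V *:%R f H).

Definition lcast (k : comPzRingType) (I : Type) (F : I -> lmodType k) (i j : I) (e : i = j) :
  {linear F i -> F j} :=
  match e in _ = j return {linear F i -> F j} with erefl => mklin (f:=idfun) (fun _ _ _ => erefl) end.

Section Gen.
Variable k : comPzRingType.

Lemma lin_eq (U V : lmodType k) (l1 l2 : {linear U -> V}) :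
  (forall m, l1 m = l2 m) -> l1 = l2.
Proof.
move: l1 l2 => [f1 c1] [f2 c2] /= H.
have E : f1 = f2 := functional_extensionality _ _ H; subst f2.
move: c1 c2 => [[a1] [b1]] [[a2] [b2]].
by rewrite (proof_irrelevance _ a1 a2) (proof_irrelevance _ b1 b2).
Qed.

Lemma lcast_id (I : Type) (F : I -> lmodType k) (i : I) (e : i = i) m :
  lcast F e m = m.
Proof. by rewrite (proof_irrelevance _ e erefl). Qed.

Lemma lcast_trans (I : Type) (F : I -> lmodType k) (i j l : I) (e1 : i = j) (e2 : j = l) m :
  lcast F e2 (lcast F e1 m) = lcast F (etrans e1 e2) m.
Proof. destruct e2; reflexivity. Qed.

Lemma lcast_pi (I : Type) (F : I -> lmodType k) (i j : I) (e1 e2 : i = j) m :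
  lcast F e1 m = lcast F e2 m.
Proof. by rewrite (proof_irrelevance _ e1 e2). Qed.

Lemma zhom_eq (A B : zobj k) (u v : zhom A B)
  (H : forall x, projT1 u x = projT1 v x) :
  (forall x m, lcast (zmod B) (H x) (projT2 u x m) = projT2 v x m) -> u = v.
Proof.
move: u v H => [u1 u2] [v1 v2] /= H Hm.
have E : u1 = v1 := functional_extensionality _ _ H; subst v1.
congr existT; apply: functional_extensionality_dep => x; apply: lin_eq => m.
by rewrite -Hm lcast_id.
Qed.

Lemma zhom_eq_inv (A B : zobj k) (u v : zhom A B) : u = v ->
  exists H : forall x, projT1 u x = projT1 v x,
    forall x m, lcast (zmod B) (H x) (projT2 u x m) = projT2 v x m.
Proof. by move=> ->; exists (fun x => erefl). Qed.

Lemma zhom_nat (A B : zobj k) (u : zhom A B) a1 a2 (e : a1 = a2) m :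
  lcast (zmod B) (f_equal (projT1 u) e) (projT2 u a1 m) = projT2 u a2 (lcast (zmod A) e m).
Proof. destruct e; reflexivity. Qed.
End Gen.

Section Ker.
Variables (k : comPzRingType) (U V : lmodType k) (a b : {linear U -> V}).
Definition kerS : pred U := fun u => a u == b u.
Definition Ker := {u : U | kerS u}.
HB.instance Definition _ := [isSub for (@proj1_sig U kerS : Ker -> U)].
HB.instance Definition _ := [Choice of Ker by <:].
Lemma kerS_closed : subsemimod_closed kerS.
Proof.
split; first split.
- by rewrite unfold_in /kerS !raddf0.
- move=> u v; rewrite !unfold_in /kerS => /eqP hu /eqP hv.
  apply/eqP; rewrite !raddfD; congr (_ + _); [exact: hu|exact: hv].
- move=> c u; rewrite !unfold_in /kerS => /eqP hu.
  apply/eqP; rewrite !linearZ /=; congr (_ *: _); exact: hu.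
Qed.
HB.instance Definition _ := GRing.SubChoice_isSubLmodule.Build k U kerS Ker kerS_closed.
Definition KerL : lmodType k := Ker.
Lemma Kval_lin : linear (fun m : KerL => val m).
Proof. move=> c x y. exact: linearP. Qed.
End Ker.

Section Equalizer.
Variables (k : comPzRingType) (A B : zobj k) (f g : zhom A B).
Definition Eidx := {x : zset A | projT1 f x = projT1 g x}.
Definition Efib (p : Eidx) : lmodType k :=
  KerL ((lcast (zmod B) (proj2_sig p) \o projT2 f (sval p))%FUN : {linear _ -> _})
       (projT2 g (sval p)).
Definition Eobj : zobj k := ZObj Efib.
Definition Emor : zhom Eobj A :=
  existT _ (fun p : Eidx => sval p) (fun p => mklin (@Kval_lin _ _ _ _ _)).

Lemma Emor_eq : zcomp f Emor = zcomp g Emor.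
Proof.
refine (@zhom_eq _ _ _ (zcomp f Emor) (zcomp g Emor) (fun p : zset Eobj => proj2_sig p) _) => p m /=.
exact: (eqP (valP m)).
Qed.

Lemma sig_inj (T : Type) (P : T -> Prop) (a b : {x | P x}) : sval a = sval b -> a = b.
Proof.
case: a b => [x px] [y py] /= e; subst y; congr exist; exact: proof_irrelevance.
Qed.

Lemma Ecast_val (p1 p2 : Eidx) (e : p1 = p2) (x : Efib p1) :
  val (lcast Efib e x) = lcast (zmod A) (f_equal sval e) (val x).
Proof. destruct e; reflexivity. Qed.

Lemma Emor_mono (Z : zobj k) (v1 v2 : zhom Z Eobj) :
  zcomp Emor v1 = zcomp Emor v2 -> v1 = v2.
Proof.
move=> /zhom_eq_inv [H Hm].
have H' : forall w, projT1 v1 w = projT1 v2 w.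
  move=> w; apply: sig_inj; exact: H.
refine (@zhom_eq _ _ _ _ _ H' _) => w m; apply: val_inj.
have := Hm w m; rewrite /= => <-.
have -> := Ecast_val (H' w) (projT2 v1 w m).
exact: lcast_pi.
Qed.

Lemma Eq_univ (Z : zobj k) (z : zhom Z A) :
  zcomp f z = zcomp g z -> exists! u : zhom Z Eobj, zcomp Emor u = z.
Proof.
move=> /zhom_eq_inv [H Hm].
pose uidx w : Eidx := exist _ (projT1 z w) (H w).
have Hk : forall w m, kerS ((lcast (zmod B) (proj2_sig (uidx w)) \o projT2 f (sval (uidx w)))%FUN : {linear _ -> _})
       (projT2 g (sval (uidx w))) (projT2 z w m).
  move=> w m; apply/eqP; exact (Hm w m).
pose mk w m : Efib (uidx w) := exist _ (projT2 z w m) (Hk w m).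
have ulin : forall w, linear (mk w).
  move=> w c x y; apply: val_inj => /=; exact: linearP.
pose u : zhom Z Eobj := existT _ uidx (fun w => mklin (ulin w)).
have Hu : zcomp Emor u = z.
  by refine (@zhom_eq _ _ _ (zcomp Emor u) z (fun w => erefl) _) => w m.
exists u; split=> // u' Hu'; apply: Emor_mono; by rewrite Hu Hu'.
Qed.

Lemma Eq_ok : is_equalizer f g Emor.
Proof. split; [exact: Emor_eq | exact: Eq_univ]. Qed.
End Equalizer.

Section Quot.
Variables (k : comPzRingType) (L : Type) (ladd : L -> L -> L) (lzero : L)
  (lscale : k -> L -> L).
Variable valid : forall W : lmodType k, (L -> W) -> Prop.
Hypothesis validD : forall (W : lmodType k) (h : L -> W), valid h -> forall a b, h (ladd a b) = h a + h b.
Hypothesis valid0 : forall (W : lmodType k) (h : L -> W), valid h -> h lzero = 0.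
Hypothesis validZ : forall (W : lmodType k) (h : L -> W), valid h -> forall c a, h (lscale c a) = c *: h a.

Definition qrel (a b : L) : Prop :=
  forall (W : lmodType k) (h : L -> W), valid h -> h a = h b.
Definition QT := {P : L -> Prop | exists a, P = qrel a}.
Definition qcls (a : L) : QT := exist _ (qrel a) (ex_intro _ a erefl).

Lemma qcls_eq a b : qrel a b -> qcls a = qcls b.
Proof.
move=> H.
have E : qrel a = qrel b.
  apply: functional_extensionality => c; apply: propositional_extensionality.
  split=> H1 W h vh; rewrite -H1 //; [by rewrite H | by rewrite H].
rewrite /qcls; move: (ex_intro _ a _) (ex_intro _ b _); rewrite E => p1 p2.
by rewrite (proof_irrelevance _ p1 p2).
Qed.

Lemma qcls_inj a b : qcls a = qcls b -> qrel a b.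
Proof.
move=> E; have: proj1_sig (qcls a) b by rewrite E /= => W h.
by move=> H W h vh; rewrite (H W h vh).
Qed.

Lemma qcls_surj (q : QT) : exists a, q = qcls a.
Proof.
case: q => P [a ea]; exists a; subst P; rewrite /qcls; congr exist; try exact: proof_irrelevance.
Qed.

Definition qrep (q : QT) : L := proj1_sig (constructive_indefinite_description _ (qcls_surj q)).
Lemma qrepK q : qcls (qrep q) = q.
Proof. rewrite /qrep; case: constructive_indefinite_description => a /= ->; done. Qed.

Lemma qrep_cls a : qrel (qrep (qcls a)) a.
Proof. apply: qcls_inj; exact: qrepK. Qed.

Definition qadd (p q : QT) := qcls (ladd (qrep p) (qrep q)).
Definition qzero := qcls lzero.
Definition qscale c (q : QT) := qcls (lscale c (qrep q)).
Definition qopp (q : QT) := qscale (-1) q.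

Lemma qaddE a b : qadd (qcls a) (qcls b) = qcls (ladd a b).
Proof.
apply: qcls_eq => W h vh; rewrite !validD //.
by rewrite (qrep_cls a vh) (qrep_cls b vh).
Qed.
Lemma qscaleE c a : qscale c (qcls a) = qcls (lscale c a).
Proof.
apply: qcls_eq => W h vh; rewrite !validZ //.
by rewrite (qrep_cls a vh).
Qed.

HB.instance Definition _ := boolp.gen_eqMixin QT.
HB.instance Definition _ := boolp.gen_choiceMixin QT.

Ltac qelim := repeat (let q := fresh "q" in intro q;
  let a := fresh "a" in have [a ->] := qcls_surj q; clear q).

Lemma qaddA : associative qadd.
Proof. qelim; rewrite !qaddE; apply: qcls_eq => W h vh; by rewrite !validD // addrA. Qed.
Lemma qaddC : commutative qadd.
Proof. qelim; rewrite !qaddE; apply: qcls_eq => W h vh; by rewrite !validD // addrC. Qed.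
Lemma qadd0 : left_id qzero qadd.
Proof. qelim; rewrite /qzero !qaddE; apply: qcls_eq => W h vh; by rewrite !validD // valid0 // add0r. Qed.
Lemma qaddN : left_inverse qzero qopp qadd.
Proof.
qelim; rewrite /qopp /qzero qscaleE !qaddE; apply: qcls_eq => W h vh.
by rewrite !validD // validZ // valid0 // scaleN1r addNr.
Qed.
HB.instance Definition _ := GRing.isZmodule.Build QT qaddA qaddC qadd0 qaddN.

Lemma qscaleA a b v : qscale a (qscale b v) = qscale (a * b) v.
Proof. move: v; qelim; rewrite !qscaleE; apply: qcls_eq => W h vh; by rewrite !validZ // scalerA. Qed.
Lemma qscale1 : left_id 1 qscale.
Proof. qelim; rewrite !qscaleE; apply: qcls_eq => W h vh; by rewrite !validZ // scale1r. Qed.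
Lemma qscaleDr c x y : qscale c (qadd x y) = qadd (qscale c x) (qscale c y).
Proof.
move: x y; qelim; rewrite (qaddE a a0) (qscaleE c a) (qscaleE c a0) (qscaleE c (ladd a a0)) (qaddE (lscale c a) (lscale c a0)).
by apply: qcls_eq => W h vh; rewrite !(validZ, validD) // scalerDr.
Qed.
Lemma qscaleDl v a b : qscale (a + b) v = qadd (qscale a v) (qscale b v).
Proof.
move: v; qelim; rewrite (qscaleE a a0) (qscaleE b a0) (qscaleE (a + b) a0) qaddE.
by apply: qcls_eq => W h vh; rewrite !(validZ, validD) // scalerDl.
Qed.
HB.instance Definition _ := GRing.Zmodule_isLmodule.Build k QT qscaleA qscale1 qscaleDr qscaleDl.
Definition QM : lmodType k := QT.

Lemma qclsD a b : qcls (ladd a b) = (qcls a : QM) + qcls b.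
Proof. by rewrite -qaddE. Qed.
Lemma qclsZ c a : qcls (lscale c a) = c *: (qcls a : QM).
Proof. by rewrite -qscaleE. Qed.

Section Lift.
Variables (W : lmodType k) (h : L -> W) (vh : valid h).
Definition qlift (q : QM) : W := h (qrep q).
Lemma qliftE a : qlift (qcls a) = h a.
Proof. exact: qrep_cls. Qed.
Lemma qlift_lin : linear qlift.
Proof.
move=> c; qelim; rewrite -qclsZ -qclsD !qliftE validD // validZ //.
Qed.
End Lift.
End Quot.


Section Coeq.
Variables (k : comPzRingType) (A B : zobj k) (f g : zhom A B).
Local Notation Y := (zset B).
Local Notation N := (zmod B).

Definition yrel (y1 y2 : Y) : Prop :=
  forall P : Y -> Prop, (forall x, P (projT1 f x) <-> P (projT1 g x)) -> (P y1 <-> P y2).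
Lemma yrel_refl y : yrel y y. Proof. by move=> P _. Qed.
Lemma yrel_sym a b : yrel a b -> yrel b a.
Proof. by move=> r P HP; split=> H; apply/(r P HP). Qed.
Lemma yrel_trans a b c : yrel a b -> yrel b c -> yrel a c.
Proof. move=> r1 r2 P HP; rewrite (r1 P HP); exact: r2. Qed.

Definition Yq := {S : Y -> Prop | exists y, S = yrel y}.
Definition ycls (y : Y) : Yq := exist _ (yrel y) (ex_intro _ y erefl).

Lemma ycls_eq a b : yrel a b -> ycls a = ycls b.
Proof.
move=> H.
have E : yrel a = yrel b.
  apply: functional_extensionality => c; apply: propositional_extensionality.
  split=> H1; [exact: yrel_trans (yrel_sym H) H1 | exact: yrel_trans H H1].
rewrite /ycls; move: (ex_intro _ a _) (ex_intro _ b _); rewrite E => p1 p2.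
by rewrite (proof_irrelevance _ p1 p2).
Qed.

Lemma ycls_surj (c : Yq) : exists y, c = ycls y.
Proof.
case: c => P [a ea]; exists a; subst P; rewrite /ycls; congr exist; try exact: proof_irrelevance.
Qed.

Definition yrep (c : Yq) : Y := proj1_sig (constructive_indefinite_description _ (ycls_surj c)).
Lemma yrepP c : c = ycls (yrep c).
Proof. rewrite /yrep; by case: constructive_indefinite_description. Qed.

Lemma ymem y : proj1_sig (ycls y) y.
Proof. exact: yrel_refl. Qed.

Lemma ymem_rep (c : Yq) y : proj1_sig c y -> yrel (yrep c) y.
Proof. move=> H; have E := yrepP c; rewrite E in H; exact: H. Qed.

Lemma ymem_cls (c : Yq) y : proj1_sig c y -> ycls y = c.
Proof. move=> H; rewrite [in RHS](yrepP c); apply: ycls_eq; apply: yrel_sym; exact: ymem_rep. Qed.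

Lemma yrel_fg x : yrel (projT1 f x) (projT1 g x).
Proof. by move=> P HP. Qed.

Lemma yfg x : ycls (projT1 f x) = ycls (projT1 g x).
Proof. apply: ycls_eq; exact: yrel_fg. Qed.

Lemma ymem_fg (c : Yq) x : proj1_sig c (projT1 f x) -> proj1_sig c (projT1 g x).
Proof.
move=> H; have r := ymem_rep H; have E := yrepP c.
rewrite E; exact: yrel_trans r (yrel_fg x).
Qed.
Lemma ymem_gf (c : Yq) x : proj1_sig c (projT1 g x) -> proj1_sig c (projT1 f x).
Proof.
move=> H; have r := ymem_rep H; have E := yrepP c.
rewrite E; exact: yrel_trans r (yrel_sym (yrel_fg x)).
Qed.

Definition Ent (c : Yq) := {p : {y : Y | proj1_sig c y} & N (proj1_sig p)}.
Definition Lc (c : Yq) := seq (Ent c).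
Definition sumL c (W : lmodType k) (hh : forall y, N y -> W) (l : Lc c) : W :=
  \sum_(e <- l) hh (proj1_sig (projT1 e)) (projT2 e).
Definition lsc c (a : k) (l : Lc c) : Lc c :=
  map (fun e : Ent c => existT (fun p : {y : Y | proj1_sig c y} => N (proj1_sig p)) (projT1 e) (a *: projT2 e)) l.
Definition compat (W : lmodType k) (hh : forall y, {linear N y -> W}) :=
  forall x m, hh (projT1 f x) (projT2 f x m) = hh (projT1 g x) (projT2 g x m).
Definition cvalid c (W : lmodType k) (h : Lc c -> W) : Prop :=
  exists hh : forall y, {linear N y -> W}, compat hh /\ forall l, h l = sumL (fun y => hh y) l.

Lemma cvalidD c (W : lmodType k) (h : Lc c -> W) : cvalid h -> forall a b, h (a ++ b) = h a + h b.
Proof. by case=> hh [_ E] a b; rewrite !E /sumL big_cat. Qed.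
Lemma cvalid0 c (W : lmodType k) (h : Lc c -> W) : cvalid h -> h [::] = 0.
Proof. by case=> hh [_ E]; rewrite !E /sumL big_nil. Qed.
Lemma cvalidZ c (W : lmodType k) (h : Lc c -> W) : cvalid h -> forall a l, h (lsc a l) = a *: h l.
Proof.
case=> hh [_ E] a l; rewrite !E /sumL /lsc big_map scaler_sumr.
by apply: eq_bigr => e _ /=; rewrite linearZ.
Qed.

Definition Fib (c : Yq) : lmodType k := QM (@cvalidD c) (@cvalid0 c) (@cvalidZ c).
Definition Qobj : zobj k := ZObj Fib.
Local Notation cl c l := (qcls (@cvalid c) l : Fib c).

Definition sing y (n : N y) : Lc (ycls y) :=
  [:: existT (fun p : {y0 : Y | proj1_sig (ycls y) y0} => N (proj1_sig p)) (exist _ y (ymem y)) n].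

Lemma qmor_lin y : linear (fun n : N y => cl (ycls y) (sing n)).
Proof.
move=> a n1 n2; rewrite -qclsZ -qclsD; apply: qcls_eq => W h [hh [_ E]].
by rewrite !E /sumL /lsc /= !big_cons !big_nil /= !addr0 linearD.
Qed.

Definition Qmor : zhom B Qobj := existT _ ycls (fun y => mklin (@qmor_lin y)).

Lemma cast_cl c1 c2 (e : c1 = c2) (l1 : Lc c1) (l2 : Lc c2) :
  (forall (W : lmodType k) (hh : forall y, {linear N y -> W}), compat hh ->
     sumL (fun y => hh y) l1 = sumL (fun y => hh y) l2) ->
  lcast (zmod Qobj) e (cl c1 l1) = cl c2 l2.
Proof.
destruct e => H; rewrite lcast_id; apply: qcls_eq => W h [hh [cp E]].
rewrite !E; exact: H.
Qed.

Lemma Qmor_eq : zcomp Qmor f = zcomp Qmor g.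
Proof.
refine (@zhom_eq _ _ _ (zcomp Qmor f) (zcomp Qmor g) yfg _) => x m /=.
apply: cast_cl => W hh cp; rewrite /sumL !big_cons !big_nil /= !addr0; exact: cp.
Qed.

Lemma cl_sum c (l : Lc c) : cl c l = \sum_(e <- l) cl c [:: e].
Proof.
elim: l => [|e l IH]; first by rewrite big_nil.
by rewrite big_cons -IH -qclsD.
Qed.

Lemma cl_single c (y : Y) (p : proj1_sig c y) (n : N y) :
  cl c [:: existT (fun p : {y0 : Y | proj1_sig c y0} => N (proj1_sig p)) (exist _ y p) n]
  = lcast (zmod Qobj) (ymem_cls p) (projT2 Qmor y n).
Proof.
symmetry; apply: cast_cl => W hh cp; by rewrite /sumL !big_cons !big_nil.
Qed.

Lemma fib_ext c (W : lmodType k) (a b : {linear Fib c -> W}) :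
  (forall y (p : proj1_sig c y) n,
     a (cl c [:: existT (fun p : {y0 : Y | proj1_sig c y0} => N (proj1_sig p)) (exist _ y p) n])
   = b (cl c [:: existT (fun p : {y0 : Y | proj1_sig c y0} => N (proj1_sig p)) (exist _ y p) n])) ->
  forall m, a m = b m.
Proof.
move=> Hab m; have [l ->] := qcls_surj m.
rewrite cl_sum !raddf_sum; apply: eq_bigr => [[[y p] n]] _; exact: Hab.
Qed.

Lemma Qmor_epi (Z : zobj k) (v1 v2 : zhom Qobj Z) :
  zcomp v1 Qmor = zcomp v2 Qmor -> v1 = v2.
Proof.
move=> /zhom_eq_inv [H Hm].
have H' : forall c, projT1 v1 c = projT1 v2 c.
  move=> c; have [y ->] := ycls_surj c; exact: H.
refine (@zhom_eq _ _ _ v1 v2 H' _) => c.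
apply: (fib_ext (a := ((lcast (zmod Z) (H' c)) \o projT2 v1 c)%FUN : {linear _ -> _}) (b := projT2 v2 c)).
move=> y p n /=.
rewrite cl_single -(zhom_nat v1 (ymem_cls p)) -(zhom_nat v2 (ymem_cls p)).
have := Hm y n; rewrite /= => <-.
by rewrite !lcast_trans; apply: lcast_pi.
Qed.

Section CoeqU.
Variables (Z : zobj k) (z : zhom B Z) (Hz0 : zcomp z f = zcomp z g).

Lemma zconst y1 y2 : yrel y1 y2 -> projT1 z y1 = projT1 z y2.
Proof.
have [Hz _] := zhom_eq_inv Hz0.
move=> r.
have HP : forall x, (projT1 z y1 = projT1 z (projT1 f x)) <-> (projT1 z y1 = projT1 z (projT1 g x)).
  by move=> x; have /= -> := Hz x.
exact: ((r (fun y => projT1 z y1 = projT1 z y) HP).1 erefl).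
Qed.

Definition uidx (c : Yq) := projT1 z (yrep c).
Lemma umem c y : proj1_sig c y -> projT1 z y = uidx c.
Proof. move=> H; symmetry; apply: zconst; exact: ymem_rep. Qed.

Lemma zero_lin (U V : lmodType k) : linear (fun _ : U => (0 : V)).
Proof. by move=> a x y; rewrite scaler0 addr0. Qed.
Definition zerolin (U V : lmodType k) : {linear U -> V} := mklin (@zero_lin U V).

Definition hh c y : {linear N y -> zmod Z (uidx c)} :=
  match excluded_middle_informative (proj1_sig c y) with
  | left Hy => ((lcast (zmod Z) (umem Hy)) \o projT2 z y)%FUN : {linear _ -> _}
  | right _ => zerolin _ _
  end.

Lemma hh_in c y (Hy : proj1_sig c y) n : hh c y n = lcast (zmod Z) (umem Hy) (projT2 z y n).
Proof.
rewrite /hh; case: excluded_middle_informative => [Hy'|/(_ Hy) []] /=.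
exact: lcast_pi.
Qed.

Lemma hh_out c y (Hy : ~ proj1_sig c y) n : hh c y n = 0.
Proof. rewrite /hh; by case: excluded_middle_informative. Qed.

Lemma hh_compat c : compat (hh c).
Proof.
have [Hz Hzm] := zhom_eq_inv Hz0.
move=> x m; case: (classic (proj1_sig c (projT1 f x))) => Hf.
- have Hg := ymem_fg Hf; rewrite (hh_in Hf) (hh_in Hg).
  have := Hzm x m; rewrite /= => <-.
  by rewrite lcast_trans; apply: lcast_pi.
- have Hg : ~ proj1_sig c (projT1 g x) by move=> /ymem_gf.
  by rewrite (hh_out Hf) (hh_out Hg).
Qed.

Lemma hvalid c : @cvalid c _ (@sumL c _ (fun y => hh c y)).
Proof. by exists (hh c); split=> //; exact: hh_compat. Qed.

Definition ulin c : {linear Fib c -> zmod Z (uidx c)} := mklin (qlift_lin (hvalid c)).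
Definition umor : zhom Qobj Z := existT _ uidx ulin.

Lemma umor_ok : zcomp umor Qmor = z.
Proof.
refine (@zhom_eq _ _ _ (zcomp umor Qmor) z (fun y => esym (umem (ymem y))) _) => y n /=.
rewrite qliftE; last exact: hvalid.
rewrite /sumL big_cons big_nil addr0 /= (hh_in (ymem y)).
by rewrite lcast_trans lcast_id.
Qed.
End CoeqU.

Lemma Coeq_ok : is_coequalizer f g Qmor.
Proof.
split; first exact: Qmor_eq.
move=> Z z Hz; exists (umor Hz); split; first exact: umor_ok.
move=> u' Hu'; apply: Qmor_epi; by rewrite umor_ok Hu'.
Qed.
End Coeq.

Theorem proposition2p11 (k : comPzRingType) :
  has_equalizers k /\ has_coequalizers k.
Proof.
split=> A B f g.
- by exists (Eobj f g), (Emor f g); exact: Eq_ok.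
- by exists (Qobj f g), (Qmor f g); exact: Coeq_ok.
Qed.
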